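(* Let $(\mathbb{Z}_{(p_n)},+\mathbf{1})$ and $(\mathbb{Z}_{(q_n)},+\mathbf{1})$ be torsion free odometers with scales $(p_n)$ and $(q_n)$ respectively. If $\operatorname{Aut}^{(\infty)}(\mathbb{Z}_{(p_n)},+\mathbf{1})$ and $\operatorname{Aut}^{(\infty)}(\mathbb{Z}_{(q_n)},+\mathbf{1})$ are isomorphic as groups, then $\mathbb{Z}_{(p_n)}$ and $\mathbb{Z}_{(q_n)}$ are isomorphic as groups.
   Context: A scale is a sequence $(p_n)$ of positive integers with $p_n\mid p_{n+1}$, not eventually constant; the odometer is $\mathbb{Z}_{(p_n)}=\{(x_n)\in\prod_n\mathbb{Z}/p_n\mathbb{Z}: x_{n+1}\equiv x_n\bmod p_n\}$, and $+\mathbf{1}$ is translation by $\mathbf{1}=(1,1,\dots)$. For a prime $p$, $\nu_p(n)$ is the $p$-adic valuation and $\mathbf{v}_p((p_n))=\lim_n\nu_p(p_n)\in\mathbb{N}\cup\{0,\infty\}$. The odometer (or scale) is torsion free if $\mathbf{v}_p((p_n))\in\{0,\infty\}$ for every prime $p$. For a homeomorphism $T$ of a compact metric space $X$, $\operatorname{Aut}(X,T)$ is the group of homeomorphisms commuting with $T$ and $\operatorname{Aut}^{(\infty)}(X,T)=\bigcup_{n\ge1}\operatorname{Aut}(X,T^n)\subseteq\operatorname{Homeo}(X)$. *)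

(* Defs.v *)
From mathcomp Require Import all_boot.
Set Implicit Arguments. Unset Strict Implicit. Unset Printing Implicit Defensive.

Definition is_scale (p : nat -> nat) : Prop :=
  (forall n, 0 < p n) /\ (forall n, p n %| p n.+1) /\
  ~ (exists N, forall n, N <= n -> p n = p N).

(* Torsion free: for every prime r, lim_n logn r (p n) (a nondecreasing
   sequence) is 0 or infinity. *)
Definition torsion_free (p : nat -> nat) : Prop :=
  forall r, prime r ->
    (forall n, logn r (p n) = 0) \/ (forall k, exists n, k <= logn r (p n)).

Record odo (p : nat -> nat) := Odo {
  odo_val :> nat -> nat;
  odo_lt : forall n, odo_val n < p n;
  odo_compat : forall n, odo_val n.+1 %% p n = odo_val n }.

Section OdoOps.
Variables (p : nat -> nat) (hp : is_scale p).

Lemma scale_pos n : 0 < p n. Proof. by case: hp. Qed.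
Lemma scale_dvd n : p n %| p n.+1. Proof. by case: hp => _ []. Qed.

Definition add_seq (x y : odo p) : nat -> nat := fun n => (x n + y n) %% p n.

Lemma add_seq_lt x y n : add_seq x y n < p n.
Proof. by rewrite /add_seq ltn_mod scale_pos. Qed.

Lemma add_seq_compat x y n : add_seq x y n.+1 %% p n = add_seq x y n.
Proof.
by rewrite /add_seq modn_dvdm ?scale_dvd // -modnDm !odo_compat.
Qed.

Definition odo_add (x y : odo p) : odo p :=
  Odo (@add_seq_lt x y) (@add_seq_compat x y).

Lemma one_lt n : 1 %% p n < p n. Proof. by rewrite ltn_mod scale_pos. Qed.
Lemma one_compat n : 1 %% p n.+1 %% p n = 1 %% p n.
Proof. by rewrite modn_dvdm ?scale_dvd. Qed.

Definition odo_one : odo p := Odo one_lt one_compat.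

Definition odo_T (x : odo p) : odo p := odo_add x odo_one.
End OdoOps.

(* Continuity for the product topology of the discrete spaces Z/p_n Z. *)
Definition odo_continuous (p q : nat -> nat) (f : odo p -> odo q) : Prop :=
  forall (x : odo p) (n : nat), exists m : nat,
    forall y : odo p, y m = x m -> f y n = f x n.

Definition odo_homeo (p : nat -> nat) (f : odo p -> odo p) : Prop :=
  exists g : odo p -> odo p,
    cancel f g /\ cancel g f /\ odo_continuous f /\ odo_continuous g.

(* membership in Aut^(oo)(Z_(p_n), +1) = union_{k>=1} Aut(Z_(p_n), T^k) *)
Definition aut_inf (p : nat -> nat) (hp : is_scale p) (f : odo p -> odo p) : Prop :=
  odo_homeo f /\
  exists k, 0 < k /\ forall x, f (iter k (odo_T hp) x) = iter k (odo_T hp) (f x).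

Definition aut_inf_isomorphic (p q : nat -> nat) (hp : is_scale p) (hq : is_scale q)
  : Prop :=
  exists phi : (odo p -> odo p) -> (odo q -> odo q),
    (forall f, aut_inf hp f -> aut_inf hq (phi f)) /\
    (forall f g, aut_inf hp f -> aut_inf hp g -> phi f = phi g -> f = g) /\
    (forall g, aut_inf hq g -> exists f, aut_inf hp f /\ phi f = g) /\
    (forall f g, aut_inf hp f -> aut_inf hp g -> phi (f \o g) = phi f \o phi g).

Definition odo_group_isomorphic (p q : nat -> nat) (hp : is_scale p) (hq : is_scale q)
  : Prop :=
  exists psi : odo p -> odo q,
    bijective psi /\
    forall x y, psi (odo_add hp x y) = odo_add hq (psi x) (psi y).

(* Main.v *)
Require Import Defs.
From mathcomp Require Import all_boot all_fingroup.
From Stdlib Require Import ProofIrrelevance FunctionalExtensionality ClassicalEpsilon.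
Set Implicit Arguments. Unset Strict Implicit. Unset Printing Implicit Defensive.

Section Basics.
Variables (p : nat -> nat) (hp : is_scale p).

Lemma oeq (x y : odo p) : (forall n, x n = y n) -> x = y.
Proof.
case: x => xv xl xc; case: y => yv yl yc /= H.
have E : xv = yv by apply: functional_extensionality.
subst yv; f_equal; apply: proof_irrelevance.
Qed.

Lemma pdvd_le m n : m <= n -> p m %| p n.
Proof.
move=> /subnK <-; elim: (n - m) => [|k IH] //=.
by rewrite addSn (dvdn_trans IH) // scale_dvd.
Qed.

Lemma compat_le (x : odo p) m n : m <= n -> x n %% p m = x m.
Proof.
move=> /subnK <-; elim: (n - m) => [|k IH] /=.
  by rewrite add0n modn_small // odo_lt.
by rewrite addSn -IH -(odo_compat x (k + m)) modn_dvdm // pdvd_le // leq_addl.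
Qed.

Lemma emb_lt (i : nat) n : i %% p n < p n.
Proof. by rewrite ltn_mod scale_pos. Qed.
Lemma emb_compat (i : nat) n : i %% p n.+1 %% p n = i %% p n.
Proof. by rewrite modn_dvdm ?scale_dvd. Qed.
Definition emb (i : nat) : odo p := Odo (@emb_lt i) (@emb_compat i).

Lemma iterT_val j (x : odo p) n : (iter j (odo_T hp) x) n = (x n + j) %% p n.
Proof.
elim: j => [|j IH] /=; first by rewrite addn0 modn_small // odo_lt.
by rewrite /add_seq IH /= modnDm !addnS addn0.
Qed.

Lemma val_mod (x : odo p) n : x n %% p n = x n.
Proof. by rewrite modn_small // odo_lt. Qed.

End Basics.

Section Cont.
Variables (p : nat -> nat) (hp : is_scale p).
Local Notation T := (odo_T hp).

Lemma cont_mono (f : odo p -> odo p) : odo_continuous f ->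
  forall (x : odo p) n, exists m, forall m' (y : odo p), m <= m' -> y m' = x m' -> f y n = f x n.
Proof.
move=> cf x n; have [m Hm] := cf x n; exists m => m' y le E.
by apply: Hm; rewrite -(compat_le hp x le) -(compat_le hp y le) E.
Qed.

Lemma cont_comp (f g : odo p -> odo p) : odo_continuous f -> odo_continuous g ->
  odo_continuous (fun x => f (g x)).
Proof.
move=> cf cg x n; have [m1 H1] := cf (g x) n.
have [m2 H2] := cg x m1; exists m2 => y E; exact/H1/H2.
Qed.

Lemma cont_id : odo_continuous (fun x : odo p => x).
Proof. by move=> x n; exists n. Qed.

Lemma cont_iter (f : odo p -> odo p) n : odo_continuous f -> odo_continuous (iter n f).
Proof.
move=> cf; elim: n => [|n IH] /=; first exact: cont_id.
exact: cont_comp.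
Qed.

Definition orel (k : nat) (x y : odo p) := forall M, exists j, y M = (x M + k * j) %% p M.

Lemma comm_iter (h : odo p -> odo p) k :
  (forall x, h (iter k T x) = iter k T (h x)) ->
  forall j x, h (iter (k * j) T x) = iter (k * j) T (h x).
Proof.
move=> C; elim=> [|j IH] x; first by rewrite muln0.
by rewrite mulnS !iterD C IH.
Qed.

Lemma SL (h : odo p -> odo p) k : odo_continuous h ->
  (forall x, h (iter k T x) = iter k T (h x)) ->
  forall x y, orel k x y -> forall N, h y N + x N = h x N + y N %[mod p N].
Proof.
move=> ch C x y R N.
have [M HM] := cont_mono ch y N.
have [j Ej] := R (maxn M N).
have E1 : h (iter (k * j) T x) N = h y N.
  by apply: HM (leq_maxl M N) _; rewrite iterT_val.
have E2 : y N = (x N + k * j) %% p N.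
  rewrite -(compat_le hp y (leq_maxr M N)) Ej modn_dvdm ?pdvd_le ?leq_maxr //.
  by rewrite -modnDml compat_le ?leq_maxr // .
rewrite -E1 comm_iter // iterT_val E2 modnDml modnDmr.
by rewrite addnAC addnA.
Qed.

Lemma rel_h (h : odo p -> odo p) k : odo_continuous h ->
  (forall x, h (iter k T x) = iter k T (h x)) ->
  forall x y, orel k x y -> orel k (h x) (h y).
Proof.
move=> ch C x y R M; have [j Ej] := R M; exists j.
have := SL ch C R M; rewrite Ej modnDmr addnA.
rewrite addnAC => /eqP; rewrite eqn_modDr => /eqP <-.
by rewrite val_mod.
Qed.

End Cont.

From Stdlib Require Import Classical.
From mathcomp Require Import zify.

Lemma stab (f : nat -> nat) B : (forall n, f n <= f n.+1) -> (forall n, f n <= B) ->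
  exists N0, forall n, N0 <= n -> f n = f N0.
Proof.
move=> mono bnd.
have mono' : forall m n, m <= n -> f m <= f n.
  move=> m n /subnK <-; elim: (n - m) => [|d IH] //; rewrite addSn (leq_trans IH) //.
suff H : forall d N, B - f N <= d -> exists N0, forall n, N0 <= n -> f n = f N0.
  exact: (H B 0 (leq_subr _ _)).
elim=> [|d IH] N hd.
  exists N => n le; have := mono' _ _ le; have := bnd n; lia.
case: (classic (forall n, N <= n -> f n = f N)) => [H|H]; first by exists N.
have [n [le ne]] : exists n, N <= n /\ f n <> f N.
  apply: NNPP => C; apply: H => n le; apply: NNPP => ne; apply: C; by exists n.
apply: (IH n).
have lt : f N < f n by have := mono' _ _ le; lia.
have := bnd n; have := bnd N; lia.
Qed.

Section Classes.
Variables (p : nat -> nat) (hp : is_scale p).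

Lemma oclasses k : 0 < k -> exists M0, forall x y : odo p,
  orel k x y <-> x M0 %% gcdn k (p M0) = y M0 %% gcdn k (p M0).
Proof.
move=> k0.
have [M0 HM0] : exists M0, forall n, M0 <= n -> gcdn k (p n) = gcdn k (p M0).
  apply: (@stab (fun n => gcdn k (p n)) k) => [n|n].
    apply: dvdn_leq; first by rewrite gcdn_gt0 k0.
    by rewrite dvdn_gcd dvdn_gcdl (dvdn_trans (dvdn_gcdr _ _)) // scale_dvd.
  by apply: dvdn_leq => //; rewrite dvdn_gcdl.
set g := gcdn k (p M0).
have gk : g %| k by rewrite dvdn_gcdl.
have gp : g %| p M0 by rewrite dvdn_gcdr.
have g0 : 0 < g by rewrite gcdn_gt0 k0.
exists M0 => x y; split.
  move=> R; have [j ->] := R M0.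
  by rewrite modn_dvdm // -modnDmr (eqP (dvdn_mulr _ gk : _ %% _ == 0)) addn0.
move=> E M; rewrite -/g in E; set M' := maxn M M0.
have gM' : gcdn k (p M') = g by apply: HM0; rewrite leq_maxr.
set P := p M'.
have gP : g %| P by rewrite -gM' dvdn_gcdr.
have xg : x M' %% g = x M0 %% g by rewrite -(compat_le hp x (leq_maxr M M0)) modn_dvdm.
have yg : y M' %% g = y M0 %% g by rewrite -(compat_le hp y (leq_maxr M M0)) modn_dvdm.
set d := y M' + (P - x M').
have xlt : x M' < P by apply: odo_lt.
have dx : d + x M' = y M' + P by rewrite /d -addnA subnK // ltnW.
have gd : g %| d.
  have : d + x M' = 0 + x M' %[mod g].
    by rewrite dx -modnDmr (eqP gP) addn0 add0n yg xg E.
  by move/eqP; rewrite eqn_modDr mod0n.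
case: (egcdnP P k0) => km kn Ek _.
exists (km * (d %/ g)).
have kj : k * (km * (d %/ g)) = d %[mod P].
  rewrite mulnA (mulnC k) Ek gM' mulnDl -modnDml -mulnA (mulnC P) mulnA modnMl add0n.
  by rewrite mulnC divnK.
have top : y M' = (x M' + k * (km * (d %/ g))) %% P.
  by rewrite -modnDmr kj modnDmr addnC dx modnDr val_mod.
rewrite -(compat_le hp y (leq_maxl M M0)) top modn_dvdm ?pdvd_le ?leq_maxl //.
by rewrite -modnDml compat_le ?leq_maxl // modnDml.
Qed.

End Classes.

Section Aut.
Variables (p : nat -> nat) (hp : is_scale p).
Local Notation T := (odo_T hp).

Lemma aut_comp (f g : odo p -> odo p) : aut_inf hp f -> aut_inf hp g -> aut_inf hp (f \o g).
Proof.
move=> [[f' [c1 [c2 [cf cf']]]] [k1 [k10 Cf]]] [[g' [d1 [d2 [cg cg']]]] [k2 [k20 Cg]]].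
split.
  exists (g' \o f'); split; first by move=> x /=; rewrite c1 d1.
  split; first by move=> x /=; rewrite d2 c2.
  by split; apply: cont_comp.
exists (k1 * k2); split; first by rewrite muln_gt0 k10.
by move=> x /=; rewrite (mulnC k1) (comm_iter Cg) mulnC (comm_iter Cf).
Qed.

Lemma aut_iter (f : odo p -> odo p) n : aut_inf hp f -> aut_inf hp (iter n.+1 f).
Proof.
move=> af; elim: n => [|n IH]; first by [].
have -> : iter n.+2 f = f \o iter n.+1 f by [].
exact: aut_comp.
Qed.

End Aut.

Definition Phi (r : nat) (p : nat -> nat) (hp : is_scale p) : Prop :=
  exists g, aut_inf hp g /\ forall h, aut_inf hp h -> forall a b, 0 < b -> ~~ (r %| b) ->
    iter (r ^ a.+1) h <> iter (r ^ a * b) g.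

Lemma phi_iter (p q : nat -> nat) (hp : is_scale p) (hq : is_scale q)
  (phi : (odo p -> odo p) -> (odo q -> odo q)) :
  (forall f g, aut_inf hp f -> aut_inf hp g -> phi (f \o g) = phi f \o phi g) ->
  forall f, aut_inf hp f -> forall n, phi (iter n.+1 f) = iter n.+1 (phi f).
Proof.
move=> hom f af; elim=> [|n IH]; first by [].
have -> : iter n.+2 f = f \o iter n.+1 f by [].
rewrite hom ?IH //; exact: aut_iter.
Qed.

Lemma transferPhi r (p q : nat -> nat) (hp : is_scale p) (hq : is_scale q) :
  prime r -> aut_inf_isomorphic hp hq -> (Phi r hp <-> Phi r hq).
Proof.
move=> pr [phi [A [I [S H]]]].
have rpos n : 0 < r ^ n by rewrite expn_gt0 prime_gt0.
have ipos a b : 0 < b -> 0 < r ^ a * b by move=> b0; rewrite muln_gt0 rpos.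
split.
  move=> [g [ag Hg]]; exists (phi g); split; first exact: A.
  move=> h' ah' a b b0 nb E.
  have [h [ah Eh]] := S h' ah'; subst h'.
  apply: (Hg h ah a b b0 nb); move: E.
  rewrite -(prednK (rpos a.+1)) -(prednK (ipos a b b0)) -!phi_iter // => E.
  apply: I E; [exact: aut_iter | exact: aut_iter].
move=> [g' [ag' Hg]]; have [g [ag Eg]] := S g' ag'; subst g'.
exists g; split => // h ah a b b0 nb E; apply: (Hg (phi h) (A h ah) a b b0 nb).
move: (congr1 phi E); rewrite -(prednK (rpos a.+1)) -(prednK (ipos a b b0)).
by rewrite !phi_iter.
Qed.

From mathcomp Require Import all_solvable.

Lemma count_fix (S : finType) (s : {perm S}) r a : prime r ->
  (s ^+ (r ^ a.+1))%g = 1%g -> ~~ (r ^ a.+1 %| #|S|) -> exists x, iter (r ^ a) s x = x.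
Proof.
move=> pr so nd; apply: NNPP => H; case/negP: nd.
have acts : [acts <[s]>%g, on [set: S] | 'P].
  by apply/actsP => g _ x; rewrite !inE.
rewrite -cardsT -(acts_sum_card_orbit acts); apply: dvdn_sum => O /imsetP [x _ ->].
rewrite -porbitE.
have : #|porbit s x| %| r ^ a.+1.
  rewrite porbitE (dvdn_trans (dvdn_orbit _ _ _)) // -orderE order_dvdn so //.
move/(dvdn_pfactor _ _ pr) => [c]; rewrite leq_eqVlt => /orP [/eqP -> -> //| lt] E.
exfalso; apply: H; exists x.
have -> : r ^ a = r ^ (a - c) * #|porbit s x| by rewrite E -expnD subnK.
rewrite iterM; elim: (r ^ (a - c)) => [|n IH] //=.
by rewrite IH iter_porbit.
Qed.

Section InP.
Variables (p : nat -> nat) (hp : is_scale p).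
Local Notation T := (odo_T hp).

Lemma m1_lt n : (p n).-1 < p n. Proof. by rewrite prednK ?scale_pos. Qed.
Lemma m1_compat n : (p n.+1).-1 %% p n = (p n).-1.
Proof.
have [c Ec] := dvdnP (scale_dvd hp n).
have p0 := scale_pos hp n; have p1 := scale_pos hp n.+1.
rewrite Ec; case: c Ec p1 => [|c] Ec p1; first by rewrite Ec in p1.
rewrite mulSnr -subn1 -addnBA // modnMDl modn_small subn1 ?prednK //.
Qed.
Definition odo_m1 : odo p := Odo m1_lt m1_compat.
Definition Tinv (x : odo p) : odo p := odo_add hp x odo_m1.
Lemma addE (x y : odo p) n : (odo_add hp x y) n = (x n + y n) %% p n. Proof. by []. Qed.
Lemma oneE n : (odo_one hp) n = 1 %% p n. Proof. by []. Qed.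

Lemma T_aut : aut_inf hp T.
Proof.
split; last by exists 1.
exists Tinv; split.
  move=> x; apply: oeq => n; rewrite /Tinv /odo_T !addE oneE /= modnDml addnAC modnDmr.
  by rewrite -addnA addn1 prednK ?scale_pos // modnDr val_mod.
split.
  move=> x; apply: oeq => n; rewrite /Tinv /odo_T !addE oneE /= modnDml modnDmr.
  by rewrite -addnA addn1 prednK ?scale_pos // modnDr val_mod.
split; move=> x n; exists n => y E /=; by rewrite /add_seq E.
Qed.

Lemma comm_iter_h (h : odo p -> odo p) k n :
  (forall x, h (iter k T x) = iter k T (h x)) ->
  forall x, iter n h (iter k T x) = iter k T (iter n h x).
Proof. move=> C x; elim: n => [|n IH] //=; by rewrite IH C. Qed.

Lemma rel_trans k (x y z : odo p) : 0 < k -> orel k x y -> orel k y z -> orel k x z.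
Proof.
move=> k0; have [M0 HM] := oclasses hp k0; rewrite !HM; by move=> -> ->.
Qed.

Lemma L_in r : prime r -> torsion_free p -> (exists n, r %| p n) -> Phi r hp.
Proof.
move=> pr tf [n0 rn0].
exists T; split; first exact: T_aut.
move=> h [[h' [_ [_ [ch _]]]] _] a b b0 nb E.
set R := r ^ a.+1; set m := r ^ a * b.
have m0 : 0 < m by rewrite muln_gt0 expn_gt0 prime_gt0.
have C : forall x, h (iter m T x) = iter m T (h x).
  by move=> x; rewrite -E -iterSr iterS.
have [M0 HM] := oclasses hp m0.
set g := gcdn m (p M0).
have g0 : 0 < g by rewrite gcdn_gt0 m0.
have gp : g %| p M0 by rewrite dvdn_gcdr.
have gm : g %| m by rewrite dvdn_gcdl.
pose cls (x : odo p) : 'I_g := Ordinal (ltn_pmod (x M0) g0).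
pose pi (i : 'I_g) := cls (h (emb hp i)).
have cls_emb : forall i : 'I_g, cls (emb hp i) = i.
  move=> i; apply: val_inj => /=; by rewrite modn_dvdm // modn_small.
have rel_cls : forall x y, orel m x y <-> cls x = cls y.
  move=> x y; rewrite HM; split => [E1|E1]; first by apply: val_inj.
  by have := congr1 val E1.
have cls_h : forall x, cls (h x) = pi (cls x).
  move=> x; apply/rel_cls; apply: rel_h ch C _ _ _; apply/rel_cls.
  by rewrite cls_emb.
have cls_iter : forall n x, cls (iter n h x) = iter n pi (cls x).
  by move=> n x; elim: n => [|n IH] //=; rewrite cls_h IH.
have piR : forall i, iter R pi i = i.
  move=> i; rewrite -{1}(cls_emb i) -cls_iter E.
  have relT : orel m (emb hp i) (iter m T (emb hp i)).
    by move=> M; exists 1; rewrite iterT_val muln1.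
  by have := (rel_cls _ _).1 relT; rewrite cls_emb => /esym.
have R0 : 0 < R by rewrite expn_gt0 prime_gt0.
have pi_inj : injective pi.
  move=> i j Eij; rewrite -(piR i) -(piR j) -(prednK R0) !iterSr Eij //.
set s := perm pi_inj.
have sR : (s ^+ R)%g = 1%g.
  apply/permP => i; rewrite permX perm1 -[RHS](piR i).
  by apply: eq_iter => j; rewrite permE.
have nd : ~~ (R %| #|'I_g|).
  rewrite card_ord; apply/negP => Rg.
  have : R %| m := dvdn_trans Rg gm.
  by rewrite /R /m expnS (mulnC r) dvdn_pmul2l ?expn_gt0 ?prime_gt0 // (negbTE nb).
have [i Hi] := count_fix pr sR nd.
have Hi' : iter (r ^ a) pi i = i.
  by rewrite -[RHS]Hi; apply: eq_iter => j; rewrite permE.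
set x := emb hp i; set w := iter (r ^ a) h.
have cw : odo_continuous w by apply: cont_iter.
have Cw : forall y, w (iter m T y) = iter m T (w y) by move=> y; apply: comm_iter_h.
have xw : orel m x (w x) by apply/rel_cls; rewrite cls_iter cls_emb Hi'.
have [N rN] : exists N, R %| p N.
  case: (tf r pr) => [H0|H1].
    exfalso; have := H0 n0; move/eqP; rewrite -leqn0 leqNgt logn_gt0 mem_primes.
    by rewrite pr (scale_pos hp) rn0.
  have [N HN] := H1 a.+1; exists N; by rewrite pfactor_dvdn ?scale_pos.
clearbody x.
have [j Ej] := xw N.
have step : forall n, orel m x (iter n w x) /\ iter n w x N = (x N + n * (m * j)) %% p N.
  elim=> [|n [IH1 IH2]] /=.
    split; last by rewrite mul0n addn0 val_mod.
    by move=> M; exists 0; rewrite muln0 addn0 val_mod.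
  split; first by apply: (rel_trans m0 xw); apply: rel_h.
  have := SL cw Cw IH1 N; rewrite Ej IH2 modnDml modnDmr => /eqP.
  have -> : x N + m * j + (x N + n * (m * j)) = x N + n.+1 * (m * j) + x N.
    by rewrite mulSn; lia.
  by rewrite eqn_modDr => /eqP <-; rewrite val_mod.
have [_ Er] := step r.
have : iter r w x = iter m T x.
  by rewrite /w -iterM -expnS E.
move=> /(congr1 (fun y : odo p => y N)); rewrite Er iterT_val => /eqP.
rewrite eqn_modDl => /eqP Emod.
have : m %% R = 0.
  rewrite -(modn_dvdm _ rN) -Emod modn_dvdm //.
  apply/eqP; change (R %| r * (m * j)); rewrite /R /m expnS !mulnA.
  by apply: dvdn_mulr; apply: dvdn_mulr.
move=> H; have : R %| m by apply/eqP.
by rewrite /R /m expnS (mulnC r) dvdn_pmul2l ?expn_gt0 ?prime_gt0 // (negbTE nb).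
Qed.

End InP.

Section Out.
Variables (p : nat -> nat) (hp : is_scale p).
Local Notation T := (odo_T hp).

Lemma mk_lt (f : nat -> nat) n : f n %% p n < p n.
Proof. by rewrite ltn_mod scale_pos. Qed.
Lemma mk_compat (f : nat -> nat) (H : forall n, f n.+1 = f n %[mod p n]) n :
  f n.+1 %% p n.+1 %% p n = f n %% p n.
Proof. by rewrite modn_dvdm ?scale_dvd // H. Qed.
Definition mk f H : odo p := Odo (mk_lt f) (@mk_compat f H).

Definition uinv R n := (R ^ (totient (p n)).-1) %% p n.

Lemma Ru R n : coprime R (p n) -> R * uinv R n = 1 %[mod p n].
Proof.
move=> co; rewrite /uinv modnMmr -expnS prednK ?totient_gt0 ?scale_pos //.
exact: Euler_exp_totient.
Qed.

Lemma ucompat R n : coprime R (p n.+1) -> uinv R n.+1 = uinv R n %[mod p n].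
Proof.
move=> co; have con : coprime R (p n).
  by apply: coprime_dvdr co; apply: scale_dvd.
have A : R * uinv R n.+1 = 1 %[mod p n].
  by rewrite -(modn_dvdm _ (scale_dvd hp n)) Ru // modn_dvdm // scale_dvd.
have B := Ru con.
have -> : uinv R n.+1 = uinv R n.+1 * 1 by rewrite muln1.
by rewrite -modnMmr -B modnMmr mulnA (mulnC _ R) -modnMml A modnMml mul1n.

Qed.

Lemma sub_compat a b P P' : a < P' -> b < P -> P %| P' -> a = b %[mod P] ->
  P' - a = P - b %[mod P].
Proof.
move=> aP bP PP E; apply/eqP; rewrite -(eqn_modDr a); apply/eqP.
by rewrite (subnK (ltnW aP)) (eqP PP) -modnDmr E modnDmr (subnK (ltnW bP)) modnn.

Qed.

End Out.

Section Out2.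
Variables (p : nat -> nat) (hp : is_scale p).
Local Notation T := (odo_T hp).

Lemma iter_cancel (f f' : odo p -> odo p) : cancel f' f -> forall n x, iter n f (iter n f' x) = x.
Proof. by move=> c n; elim: n => [|n IH] x //; rewrite iterSr iterS c IH. Qed.

Lemma L_out r : prime r -> (forall n, ~~ (r %| p n)) -> ~ Phi r hp.
Proof.
move=> pr nP [g [[[g' [c1 [c2 [cg cg']]]] [k [k0 Cg]]] Hg]].
have Cg' : forall x, g' (iter k T x) = iter k T (g' x).
  by move=> x; rewrite -{1}(c2 x) -Cg c1.
have [M0 HM] := oclasses hp k0.
set G := gcdn k (p M0).
have G0 : 0 < G by rewrite gcdn_gt0 k0.
have Gp : G %| p M0 by rewrite dvdn_gcdr.
pose cls (x : odo p) : 'I_G := Ordinal (ltn_pmod (x M0) G0).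
have cls_emb : forall i : 'I_G, cls (emb hp i) = i.
  move=> i; apply: val_inj => /=; by rewrite modn_dvdm // modn_small.
have rel_cls : forall x y, orel k x y <-> cls x = cls y.
  move=> x y; rewrite HM; split => [E1|E1]; first by apply: val_inj.
  by have := congr1 val E1.
pose pi (i : 'I_G) := cls (g (emb hp i)).
have cls_g : forall x, cls (g x) = pi (cls x).
  move=> x; apply/rel_cls; apply: rel_h cg Cg _ _ _; apply/rel_cls.
  by rewrite cls_emb.
have cls_iter : forall n x, cls (iter n g x) = iter n pi (cls x).
  by move=> n x; elim: n => [|n IH] //=; rewrite cls_g IH.
have pi_inj : injective pi.
  move=> i j E; have : orel k (g (emb hp i)) (g (emb hp j)) by apply/rel_cls.
  move/(rel_h cg' Cg'); rewrite !c1 => /rel_cls; by rewrite !cls_emb.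
set s := perm pi_inj; set o := #[s]%g.
have piO : forall i, iter o pi i = i.
  move=> i; have := congr1 (fun t : {perm 'I_G} => t i) (expg_order s).
  rewrite /= permX perm1 => E; rewrite -[RHS]E; apply: eq_iter => j; by rewrite permE.
set Gx := iter o g.
have GxR : forall x, orel k x (Gx x) by move=> x; apply/rel_cls; rewrite cls_iter piO.
have cG : odo_continuous Gx by apply: cont_iter.
have CG : forall x, Gx (iter k T x) = iter k T (Gx x) by move=> x; apply: comm_iter_h.
have o0 : 0 < o := order_gt0 s.
have [b cob Eo] := pfactor_coprime pr o0.
set a := logn r o in Eo.
set R := r ^ a.+1.
have coR : forall n, coprime R (p n).
  by move=> n; apply: coprimeXl; rewrite prime_coprime.
pose u n := uinv p R n.
pose c N (x : odo p) := Gx x N + (p N - x N).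
have ccompat : forall x N, c N.+1 x = c N x %[mod p N].
  move=> x N; rewrite /c -modnDm odo_compat.
  rewrite (@sub_compat _ _ (p N) (p N.+1) (odo_lt x N.+1) (odo_lt x N) (scale_dvd hp N)).
    by rewrite modnDmr.
  by rewrite odo_compat val_mod.
have hcompat : forall (x : odo p) N, x N.+1 + u N.+1 * c N.+1 x = x N + u N * c N x %[mod p N].
  move=> x N; rewrite -modnDm -modnMm /u ucompat // ccompat modnMm odo_compat.
  by rewrite modnDmr.
pose hx (x : odo p) : odo p := mk hp (hcompat x).
have hE : forall x N, hx x N = (x N + u N * c N x) %% p N by [].
have crel : forall x y, orel k x y -> forall N, c N y = c N x %[mod p N].
  move=> x y Rxy N; have S := SL cG CG Rxy N.
  have lx := odo_lt x N; have ly := odo_lt y N.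
  apply/eqP; rewrite -(eqn_modDr (y N + x N)).
  have -> : c N y + (y N + x N) = Gx y N + x N + p N by rewrite /c; lia.
  have -> : c N x + (y N + x N) = Gx x N + y N + p N by rewrite /c; lia.
  by rewrite !modnDr S.
have hrel : forall x, orel k x (hx x).
  move=> x N; have [j Ej] := GxR x N; exists (u N * j); rewrite hE.
  have cm : c N x = k * j %[mod p N].
    rewrite /c Ej modnDml; have lx := odo_lt x N.
    have -> : x N + k * j + (p N - x N) = k * j + p N by lia.
    by rewrite modnDr.
  by rewrite -modnDmr -modnMmr cm modnMmr modnDmr mulnCA.
have hiter : forall n x N, iter n hx x N = (x N + n * (u N * c N x)) %% p N
    /\ orel k x (iter n hx x).
  elim=> [|n IH] x N.
    split; first by rewrite mul0n addn0 val_mod.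
    by move=> M; exists 0; rewrite muln0 addn0 val_mod.
  have [IH1 IH2] := IH x N.
  split; last by apply: (rel_trans hp k0 IH2); apply: hrel.
  rewrite iterS hE -modnDmr -modnMmr (crel _ _ IH2) modnMmr modnDmr.
  by rewrite IH1 modnDml mulSn [u N * c N x + _]addnC addnA.
have hR : iter R hx = Gx.
  apply: functional_extensionality => x; apply: oeq => N.
  have [-> _] := hiter R x N.
  rewrite mulnA -modnDmr -modnMml Ru // modnMml mul1n modnDmr.
  have lx := odo_lt x N.
  have -> : x N + c N x = Gx x N + p N by rewrite /c; lia.
  by rewrite modnDr val_mod.
have hGx : forall x, hx (Gx x) = Gx (hx x).
  move=> x; apply: oeq => N; rewrite hE.
  have S := SL cG CG (hrel x) N.
  rewrite -[RHS]val_mod; apply/eqP; rewrite -(eqn_modDr (x N)) S hE.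
  rewrite modnDmr; apply/eqP; have E2 := crel _ _ (GxR x) N.
  by rewrite addnAC addnA -[in LHS]modnDmr -[in LHS]modnMmr E2 modnMmr modnDmr.
set Gx' := iter o g'.
have GG' : forall x, Gx (Gx' x) = x by apply: iter_cancel.
have G'G : forall x, Gx' (Gx x) = x by apply: iter_cancel.
have R0 : 0 < R by rewrite expn_gt0 prime_gt0.
have chx : odo_continuous hx.
  move=> x N; have [M HMc] := cont_mono hp cG x N; exists (maxn M N) => y E.
  have EN : y N = x N by rewrite -(compat_le hp y (leq_maxr M N)) E compat_le // leq_maxr.
  by rewrite !hE /c EN (HMc (maxn M N) y (leq_maxl M N) E).
have ah : aut_inf hp hx.
  split.
    exists (fun x => iter R.-1 hx (Gx' x)); split.
      move=> x /=.
      have -> : Gx' (hx x) = hx (Gx' x).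
        by rewrite -{1}(GG' x) hGx G'G.
      by rewrite -iterSr prednK // hR GG'.
    split; first by move=> x /=; rewrite -iterS (prednK R0) hR GG'.
    split => //; by apply: cont_comp; apply: cont_iter.
  exists k; split => // x; apply: oeq => N.
  have RT : orel k x (iter k T x) by move=> M; exists 1; rewrite iterT_val muln1.
  rewrite hE !iterT_val hE modnDml modnDml.
  rewrite -[in LHS]modnDmr -[in LHS]modnMmr (crel _ _ RT) modnMmr modnDmr.
  by rewrite addnAC.
apply: (Hg hx ah a b).
- by move: o0; rewrite Eo muln_gt0 => /andP [].
- by rewrite -prime_coprime.
- by rewrite hR /Gx Eo mulnC.
Qed.

End Out2.

Lemma cof (p q : nat -> nat) (hp : is_scale p) (hq : is_scale q) : torsion_free q ->
  (forall r, prime r -> (exists n, r %| p n) -> exists m, r %| q m) ->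
  forall n, exists m, p n %| q m.
Proof.
move=> tq S n.
have mono : forall r a b, a <= b -> logn r (q a) <= logn r (q b).
  by move=> r a b ab; apply: dvdn_leq_log; [apply: scale_pos | apply: pdvd_le].
have key : forall s : seq nat, {subset s <= primes (p n)} ->
    exists M, forall r, r \in s -> logn r (p n) <= logn r (q M).
  elim=> [|r s IH] sub; first by exists 0.
  have [M HM] : exists M, forall r, r \in s -> logn r (p n) <= logn r (q M).
    by apply: IH => x xs; apply: sub; rewrite inE xs orbT.
  have := sub r (mem_head _ _); rewrite mem_primes => /and3P [pr _ rp].
  have [m rm] := S r pr (ex_intro _ n rp).
  case: (tq r pr) => [H0|H1].
    exfalso; have := H0 m; move/eqP; rewrite -leqn0 leqNgt logn_gt0 mem_primes.
    by rewrite pr (scale_pos hq) rm.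
  have [m1 Hm1] := H1 (logn r (p n)).
  exists (maxn M m1) => x; rewrite inE => /orP [/eqP ->|xs].
    by rewrite (leq_trans Hm1) // mono // leq_maxr.
  by rewrite (leq_trans (HM x xs)) // mono // leq_maxl.
have [M HM] := key (primes (p n)) (fun x h => h).
exists M; apply/dvdn_partP; first by apply: scale_pos.
move=> r rpi; have := rpi; rewrite mem_primes => /and3P [pr _ _].
rewrite p_part pfactor_dvdn ?(scale_pos hq) //; apply: HM; exact: rpi.
Qed.

Section Iso.
Variables (p q : nat -> nat) (hp : is_scale p) (hq : is_scale q).
Variables (f : nat -> nat) (Hf : forall m, q m %| p (f m)).

Lemma indep (x : odo p) d a b : d %| p a -> d %| p b -> x a %% d = x b %% d.
Proof.
wlog ab : a b / a <= b => [W|] da db.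
  by case: (leqP a b) => ab; [apply: W | apply/esym/W => //; apply: ltnW].
by rewrite -(compat_le hp x ab) modn_dvdm.
Qed.

Lemma fcompat (x : odo p) m : x (f m.+1) = x (f m) %[mod q m].
Proof.
apply: indep; last exact: Hf.
by apply: dvdn_trans (Hf m.+1); apply: scale_dvd.
Qed.

Definition psi (x : odo p) : odo q := mk hq (@fcompat x).
Lemma psiE x m : psi x m = x (f m) %% q m. Proof. by []. Qed.

Lemma psi_add x y : psi (odo_add hp x y) = odo_add hq (psi x) (psi y).
Proof.
apply: oeq => m; rewrite psiE /= /add_seq !psiE /= /add_seq.
by rewrite modn_dvdm ?Hf // modnDm.
Qed.
End Iso.

Lemma roundtrip (p q : nat -> nat) (hp : is_scale p) (hq : is_scale q) f g
  (Hf : forall m, q m %| p (f m)) (Hg : forall n, p n %| q (g n)) x :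
  psi hq hp Hg (psi hp hq Hf x) = x.
Proof.
apply: oeq => n; rewrite !psiE modn_dvdm ?Hg //.
rewrite (@indep _ hp x (p n) (f (g n)) n) ?val_mod //.
exact: dvdn_trans (Hg n) (Hf (g n)).
Qed.

Lemma supp_eq (p q : nat -> nat) (hp : is_scale p) (hq : is_scale q) :
  torsion_free p -> aut_inf_isomorphic hp hq ->
  forall r, prime r -> (exists n, r %| p n) -> exists m, r %| q m.
Proof.
move=> tfp iso r pr Hp.
have PQ := (transferPhi pr iso).1 (L_in hp pr tfp Hp).
apply: NNPP => nq; apply: (@L_out q hq r pr _ PQ) => m; apply/negP => rm; apply: nq.
by exists m.
Qed.

Lemma iso_sym (p q : nat -> nat) (hp : is_scale p) (hq : is_scale q) :
  aut_inf_isomorphic hp hq -> aut_inf_isomorphic hq hp.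
Proof.
move=> [phi [A [I [S H]]]].
pose P g := fun f => aut_inf hp f /\ phi f = g.
pose psi' g := epsilon (inhabits (fun x : odo p => x)) (P g).
have spec : forall g, aut_inf hq g -> P g (psi' g).
  by move=> g ag; apply: epsilon_spec; apply: S.
exists psi'; split; first by move=> g ag; case: (spec g ag).
split.
  move=> g1 g2 a1 a2 E; case: (spec g1 a1) => _ <-; case: (spec g2 a2) => _ <-.
  by rewrite E.
split.
  move=> f af; exists (phi f); split; first exact: A.
  have [a' E'] := spec (phi f) (A f af); exact: I.
move=> g1 g2 a1 a2.
have [b1 E1] := spec g1 a1; have [b2 E2] := spec g2 a2.
have a12 : aut_inf hq (g1 \o g2) by apply: aut_comp.
have [b E] := spec _ a12.
apply: I => //; first by apply: aut_comp.
by rewrite E H // E1 E2.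
Qed.

Theorem theorem1p4 (p q : nat -> nat) (hp : is_scale p) (hq : is_scale q) :
  torsion_free p -> torsion_free q ->
  aut_inf_isomorphic hp hq -> odo_group_isomorphic hp hq.
Proof.
move=> tfp tfq iso.
have Spq := supp_eq tfp iso.
have Sqp := supp_eq tfq (iso_sym iso).
have cpq := cof hp hq tfq Spq.
have cqp := cof hq hp tfp Sqp.
pose g n := xchoose (cpq n).
have Hg : forall n, p n %| q (g n) by move=> n; apply: (xchooseP (cpq n)).
pose f m := xchoose (cqp m).
have Hf : forall m, q m %| p (f m) by move=> m; apply: (xchooseP (cqp m)).
exists (psi hp hq Hf); split; last exact: psi_add.
exists (psi hq hp Hg); [exact: roundtrip | exact: roundtrip].
Qed.
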